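(* Let $m\ge1$, $y\in\mathbb{R}^{2m+1}_+$ and $\mathbf{Y}\in\boldsymbol{\mathcal{Y}}$. Then the problem of minimizing $\mathcal{I}(\mathbf{Y}\|\mathbf{W})$ over $\mathbf{W}\in\boldsymbol{\mathcal{W}}$ has the explicit minimizer $\mathbf{W}^\star=\mathbf{W}^\star(\mathbf{Y})$, namely the element of $\boldsymbol{\mathcal{W}}$ associated with the vector $x^\star\in\mathbb{R}^{m+1}_+$ given by $$x^\star_j=\frac{\widehat{\mathbf{Y}}_j}{2\sqrt{\sum_{i=0}^{2m}y_i}},\qquad \widehat{\mathbf{Y}}_j=\sum_{i=0}^m\mathbf{Y}_{i+j,i}+\sum_{i=j}^{j+m}\mathbf{Y}_{ij},\qquad j=0,\dots,m.$$ Moreover, for every $\mathbf{W}\in\boldsymbol{\mathcal{W}}$ the Pythagorean identity $$\mathcal{I}(\mathbf{Y}\|\mathbf{W})=\mathcal{I}(\mathbf{Y}\|\mathbf{W}^\star)+\mathcal{I}(\mathbf{W}^\star\|\mathbf{W})$$ holds.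
   Context: Matrices are indexed by rows $i=0,\dots,2m$ and columns $j=0,\dots,m$. $\boldsymbol{\mathcal{Y}}$ is the set of $\mathbf{Y}\in\mathbb{R}^{(2m+1)\times(m+1)}_+$ with $\mathbf{Y}_{ij}=0$ for $i<j$ and for $i>j+m$, and with row sums $\sum_j\mathbf{Y}_{ij}=y_i$ for all $i$. $\boldsymbol{\mathcal{W}}$ is the set of matrices $\mathbf{W}\in\mathbb{R}^{(2m+1)\times(m+1)}_+$ of the form $\mathbf{W}_{ij}=x_{i-j}x_j$ for $0\le j\le m$, $j\le i\le j+m$, and $\mathbf{W}_{ij}=0$ otherwise, for some $x\in\mathbb{R}^{m+1}_+$ (the element of $\boldsymbol{\mathcal{W}}$ ''associated with'' $x$). For nonnegative arrays $M,N$ of the same size, $\mathcal{I}(M\|N)=\sum_{i,j}\big(M_{ij}\log\frac{M_{ij}}{N_{ij}}-M_{ij}+N_{ij}\big)$ (convention $0\log0=0$; $+\infty$ if some $M_{ij}>0=N_{ij}$). *)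

(* Defs.v *)
From HB Require Import structures.
From mathcomp Require Import all_boot all_order all_algebra.
From mathcomp Require Import all_classical all_reals.
From mathcomp Require Import exp.
Set Implicit Arguments. Unset Strict Implicit. Unset Printing Implicit Defensive.
Import Order.TTheory GRing.Theory Num.Theory.
Local Open Scope ring_scope.

Section Defs.
Variable R : realType.

Definition idiv (p q : nat) (M N : 'M[R]_(p, q)) : \bar R :=
  if [exists i, exists j, (0 < M i j) && (N i j == 0)] then +oo%E
  else (\sum_(i < p) \sum_(j < q)
          (if M i j == 0 then N i j
           else M i j * ln (M i j / N i j) - M i j + N i j))%:E.

Definition in_Yset (m : nat) (y : 'I_((2 * m).+1) -> R)
  (Y : 'M[R]_((2 * m).+1, m.+1)) : Prop :=
  (forall i j, 0 <= Y i j) /\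
  (forall (i : 'I_((2 * m).+1)) (j : 'I_(m.+1)),
      ((i < j)%N \/ (j + m < i)%N) -> Y i j = 0) /\
  (forall i, \sum_(j < m.+1) Y i j = y i).

Definition Wof (m : nat) (x : 'I_(m.+1) -> R) : 'M[R]_((2 * m).+1, m.+1) :=
  \matrix_(i < (2 * m).+1, j < m.+1)
    if ((j <= i) && (i <= j + m))%N then x (inord (i - j)) * x j else 0.

Definition in_Wset (m : nat) (W : 'M[R]_((2 * m).+1, m.+1)) : Prop :=
  exists x : 'I_(m.+1) -> R, (forall j, 0 <= x j) /\ W = Wof x.

Definition Yhat (m : nat) (Y : 'M[R]_((2 * m).+1, m.+1)) (j : 'I_(m.+1)) : R :=
  \sum_(0 <= i < m.+1) Y (inord (i + j)) (inord i)
  + \sum_(j <= i < j + m.+1) Y (inord i) j.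

Definition xstar (m : nat) (y : 'I_((2 * m).+1) -> R)
  (Y : 'M[R]_((2 * m).+1, m.+1)) (j : 'I_(m.+1)) : R :=
  Yhat Y j / (2 * Num.sqrt (\sum_(i < (2 * m).+1) y i)).

End Defs.

(* Main.v *)
Require Import Defs.
From HB Require Import structures.
From mathcomp Require Import all_boot all_order all_algebra.
From mathcomp Require Import all_classical all_reals.
From mathcomp Require Import exp.
From mathcomp Require Import ring lra zify.
Import Order.TTheory GRing.Theory Num.Theory.
Local Open Scope ring_scope.
Set Implicit Arguments. Unset Strict Implicit. Unset Printing Implicit Defensive.

Section Helpers.
Variable R : realType.
Variable m : nat.
Local Notation MT := ('M[R]_((2 * m).+1, m.+1)).

Definition bandb (i : 'I_((2 * m).+1)) (j : 'I_m.+1) := ((j <= i) && (i <= j + m))%N.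
Definition bandz (M : MT) := forall i j, ~~ bandb i j -> M i j = 0.

Lemma inord_sub (i : 'I_((2 * m).+1)) (j : 'I_m.+1) :
  bandb i j -> ((inord (i - j) : 'I_m.+1) : nat) = (i - j)%N.
Proof. move=> /andP[h1 h2]; rewrite inordK //; lia. Qed.

Lemma WofE (x : 'I_m.+1 -> R) i j :
  Wof x i j = if bandb i j then x (inord (i - j)) * x j else 0.
Proof. by rewrite mxE. Qed.

Lemma Wof_bandz x : bandz (Wof x).
Proof. by move=> i j hb; rewrite WofE (negbTE hb). Qed.

Lemma sum_pickl (f : 'I_m.+1 -> R) a : \sum_k (a == k)%:R * f k = f a.
Proof.
rewrite (bigD1 a) //= eqxx mul1r big1 ?addr0 // => k hk.
by rewrite eq_sym (negbTE hk) mul0r.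
Qed.

Lemma sum_pickr (f : 'I_m.+1 -> R) a : \sum_k f k * (k == a)%:R = f a.
Proof.
rewrite (bigD1 a) //= eqxx mulr1 big1 ?addr0 // => k hk.
by rewrite (negbTE hk) mulr0.
Qed.

Lemma Yhat_alt (M : MT) (hM : bandz M) k :
  Yhat M k = \sum_i \sum_j M i j * ((inord (i - j) == k)%:R + (j == k)%:R).
Proof.
have -> : \sum_i \sum_j M i j * ((inord (i - j) == k)%:R + (j == k)%:R)
  = \sum_i \sum_j M i j * (inord (i - j) == k)%:R + \sum_i \sum_j M i j * (j == k)%:R.
  rewrite -big_split /=; apply: eq_bigr => i _.
  by rewrite -big_split /=; apply: eq_bigr => j _; rewrite mulrDr.
rewrite /Yhat; congr (_ + _).
  rewrite exchange_big /= big_mkord; apply: eq_bigr => j _.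
  rewrite (bigD1 (inord (j + k))) //=.
  have hjk : ((inord (j + k) : 'I_((2 * m).+1)) : nat) = (j + k)%N.
    by rewrite inordK //; have := ltn_ord j; have := ltn_ord k; lia.
  have -> : ((inord ((inord (j + k) : 'I_((2 * m).+1)) - j) : 'I_m.+1) == k).
    by apply/eqP/val_inj; rewrite /= hjk addKn inordK.
  rewrite mulr1 big1 ?addr0; last first.
    move=> i hi; have [hb|hb] := boolP (bandb i j); last by rewrite hM // mul0r.
    case: eqP => [he|]; last by rewrite mulr0.
    exfalso; move/negP: hi; apply; apply/eqP/val_inj; rewrite /= hjk.
    have := inord_sub hb; rewrite he; move: hb => /andP[h1 h2] hk; lia.
  by rewrite inord_val.
under [RHS]eq_bigr do rewrite sum_pickr.
rewrite [RHS](eq_bigr (fun i : 'I_((2 * m).+1) => M (inord i) k)); last first.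
  by move=> i _; rewrite inord_val.
rewrite -(big_mkord xpredT (fun i => M (inord i) k)) /=.
have hk := ltn_ord k.
rewrite [RHS](big_cat_nat (n:=k)) /=; [|lia|lia].
rewrite [X in _ = _ + X](big_cat_nat (n:=(k + m.+1)%N)) /=; [|lia|lia].
have -> : \sum_(0 <= i < k) M (inord i) k = 0.
  rewrite big_nat_cond big1 //.
  move=> i /andP[/andP[_ hi] _]; apply: hM; rewrite /bandb inordK; last lia.
  by apply/negP => /andP[h1 _]; lia.
have -> : \sum_(k + m.+1 <= i < (2 * m).+1) M (inord i) k = 0.
  rewrite big_nat_cond big1 //.
  move=> i /andP[/andP[hi hi2] _]; apply: hM; rewrite /bandb inordK; last lia.
  by apply/negP => /andP[_ h2]; lia.
by rewrite add0r addr0.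
Qed.

Lemma key (M : MT) (hM : bandz M) (f : 'I_m.+1 -> R) :
  \sum_i \sum_j M i j * (f (inord (i - j)) + f j) = \sum_k Yhat M k * f k.
Proof.
rewrite [RHS](eq_bigr (fun k => \sum_i \sum_j M i j * ((inord (i - j) == k)%:R + (j == k)%:R) * f k)); last first.
  move=> k _; rewrite (Yhat_alt hM k) mulr_suml; apply: eq_bigr => i _; by rewrite mulr_suml.
rewrite [RHS]exchange_big /=; apply: eq_bigr => i _.
rewrite [RHS]exchange_big /=; apply: eq_bigr => j _.
under eq_bigr do rewrite -mulrA.
rewrite -mulr_sumr; congr (_ * _).
under eq_bigr do rewrite mulrDl.
by rewrite big_split /= !sum_pickl.
Qed.

Lemma le_dsum (F : 'I_((2 * m).+1) -> 'I_m.+1 -> R) i j :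
  (forall i j, 0 <= F i j) -> F i j <= \sum_i \sum_j F i j.
Proof.
move=> h; rewrite (bigD1 i) //= (bigD1 j) //= -addrA lerDl.
by apply: addr_ge0; apply: sumr_ge0 => *; [done|apply: sumr_ge0].
Qed.

Lemma Yhat_Wof (x : 'I_m.+1 -> R) k :
  Yhat (Wof x) k = 2 * x k * \sum_j x j.
Proof.
rewrite /Yhat.
have hk := ltn_ord k.
have -> : \sum_(0 <= i < m.+1) Wof x (inord (i + k)) (inord i) = x k * \sum_j x j.
  rewrite big_mkord mulr_sumr; apply: eq_bigr => i _.
  have hi := ltn_ord i.
  rewrite WofE /bandb !inordK; [|lia|lia].
  rewrite leq_addr /= addKn leq_add2l -ltnS hk /= inord_val.
  by congr (_ * _); congr x; apply/val_inj; rewrite /= inordK // addnK.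
rewrite -{1}(add0n k) big_addn addKn big_mkord.
have -> : \sum_(i < m.+1) Wof x (inord (i + k)) k = x k * \sum_j x j.
  rewrite mulr_sumr; apply: eq_bigr => i _.
  have hi := ltn_ord i.
  rewrite WofE /bandb !inordK; [|lia].
  have -> : ((k <= i + k <= k + m)%N) = true by apply/andP; split; lia.
  by rewrite addnK inord_val mulrC.
by ring.
Qed.

Lemma ln_divP (a b : R) : 0 < a -> 0 < b -> ln (a / b) = ln a - ln b.
Proof. by move=> ha hb; rewrite ln_div // posrE. Qed.

Lemma lnMP (a b : R) : 0 < a -> 0 < b -> ln (a * b) = ln a + ln b.
Proof. by move=> ha hb; rewrite lnM // posrE. Qed.

Lemma term_ge0 (a b : R) : 0 < a -> 0 < b -> 0 <= a * ln (a / b) - a + b.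
Proof.
move=> ha hb.
have h : ln (1 + (b / a - 1)) <= b / a - 1.
  by apply: le_ln1Dx; have := divr_gt0 hb ha; lra.
move: h; rewrite addrC subrK ln_divP // ln_divP // => h.
have -> : a * (ln a - ln b) - a + b = a * ((b / a - 1) - (ln b - ln a)).
  by field; rewrite gt_eqF.
by apply: mulr_ge0; [exact: ltW| rewrite subr_ge0].
Qed.

Lemma idiv_ge0 p q (M N : 'M[R]_(p, q)) :
  (forall i j, 0 <= M i j) -> (forall i j, 0 <= N i j) -> (0 <= idiv M N)%E.
Proof.
move=> hM hN; rewrite /idiv; case: ifPn => [_|/existsPn h]; first by rewrite leey.
rewrite lee_fin; apply: sumr_ge0 => i _; apply: sumr_ge0 => j _.
case: eqP => [_|/eqP hM0]; first exact: hN.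
have Mpos : 0 < M i j by rewrite lt_def hM0 hM.
have : N i j != 0 by move: (h i) => /existsPn /(_ j); rewrite Mpos.
move=> hN0; have Npos : 0 < N i j by rewrite lt_def hN0 hN.
exact: term_ge0.
Qed.
End Helpers.

Lemma prod_pos (R : realType) (a b : R) : 0 <= a -> 0 <= b -> a * b != 0 -> 0 < a /\ 0 < b.
Proof.
move=> ha hb; rewrite mulf_eq0 negb_or => /andP[na nb].
by split; rewrite lt_def ?na ?nb.
Qed.

Lemma comb (R : realType) (I J : finType) (F G H K : I -> J -> R) :
  \sum_i \sum_j K i j = 0 -> (forall i j, F i j + K i j = G i j + H i j) ->
  \sum_i \sum_j F i j = \sum_i \sum_j G i j + \sum_i \sum_j H i j.
Proof.
move=> h0 h; transitivity (\sum_i \sum_j F i j + \sum_i \sum_j K i j).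
  by rewrite h0 addr0.
rewrite -!big_split /=; apply: eq_bigr => i _.
by rewrite -!big_split /=; apply: eq_bigr => j _.
Qed.

Theorem lemma2 (R : realType) (m : nat) (hm : (1 <= m)%N)
  (y : 'I_((2 * m).+1) -> R) (hy : forall i, 0 <= y i)
  (Y : 'M[R]_((2 * m).+1, m.+1)) (hY : in_Yset y Y) :
  let Wstar := Wof (xstar y Y) in
  [/\ (forall j, 0 <= xstar y Y j),
      in_Wset Wstar,
      (forall W, in_Wset W -> (idiv Y Wstar <= idiv Y W)%E) &
      (forall W, in_Wset W -> idiv Y W = (idiv Y Wstar + idiv Wstar W)%E)].
Proof.
move=> Wstar.
case: hY => hY0 [hYb' hYrow].
have hYb : bandz Y.
  move=> i j; rewrite /bandb negb_and -!ltnNge => /orP h; apply: hYb'.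
  by case: h => h; [left|right].
set S := \sum_(i < (2 * m).+1) y i.
set xs := xstar y Y.
have hS0 : 0 <= S by apply: sumr_ge0.
have hYh0 : forall k, 0 <= Yhat Y k.
  by move=> k; rewrite /Yhat addr_ge0 // sumr_ge0.
have hsumYh : \sum_k Yhat Y k = 2 * S.
  transitivity (\sum_k Yhat Y k * 1); first by apply: eq_bigr => k _; rewrite mulr1.
  rewrite -(key hYb (fun _ => 1)) /S mulr_sumr; apply: eq_bigr => i _.
  rewrite -hYrow mulr_sumr; apply: eq_bigr => j _; by rewrite mulrC.
have hYhS : forall k, Yhat Y k <= 2 * S.
  move=> k; rewrite -hsumYh (bigD1 k) //= lerDl sumr_ge0 //.
have hxs0 : forall k, 0 <= xs k.
  by move=> k; rewrite /xs /xstar divr_ge0 // mulr_ge0 // sqrtr_ge0.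
have hxspos : forall k, 0 < Yhat Y k -> 0 < xs k.
  move=> k hk; have hSp : 0 < S by have := hYhS k; lra.
  by rewrite /xs /xstar divr_gt0 // mulr_gt0 // sqrtr_gt0.
have hxsY : forall k, 0 < xs k -> 0 < Yhat Y k.
  move=> k; apply: contraTT; rewrite -!leNgt => hle.
  have h0 : Yhat Y k = 0 by apply/le_anti; rewrite hle hYh0.
  by rewrite /xs /xstar h0 mul0r.
have hYhW : forall k, Yhat Wstar k = Yhat Y k.
  move=> k; rewrite /Wstar Yhat_Wof.
  have [S0|Sp] : S = 0 \/ 0 < S by move: hS0; rewrite le_eqVlt => /orP[/eqP ->|]; [left|right].
    have hk0 : Yhat Y k = 0 by apply/le_anti; rewrite hYh0 andbT; have := hYhS k; rewrite S0 mulr0.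
    by rewrite /xs /xstar hk0 mul0r mulr0 mul0r.
  have hsumxs : \sum_k xs k = Num.sqrt S.
    rewrite /xs /xstar -mulr_suml hsumYh -{1}(sqr_sqrtr hS0).
    by field; rewrite gt_eqF // sqrtr_gt0.
  by rewrite hsumxs /xs /xstar; field; rewrite gt_eqF // sqrtr_gt0; exact: Sp.
have hYpos : forall i j, 0 < Y i j ->
    bandb i j /\ 0 < xs (inord (i - j)) /\ 0 < xs j.
  move=> i j hp.
  have hb : bandb i j by apply: contraTT hp => nb; rewrite (hYb i j nb) ltxx.
  have hle : forall k, (inord (i - j) == k) || (j == k) -> Y i j <= Yhat Y k.
    move=> k hk; rewrite Yhat_alt //.
    apply: (le_trans _ (le_dsum (F := fun i j => Y i j * ((inord (i - j) == k)%:R + (j == k)%:R)) i j _)) => /=; last first.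
      by move=> *; rewrite mulr_ge0 // addr_ge0 // ler0n.
    have h1 : 1 <= (inord (i - j) == k)%:R + (j == k)%:R :> R.
      case/orP: hk => ->; rewrite mulr1n; [rewrite lerDl|rewrite lerDr]; exact: ler0n.
    have := hY0 i j; nra.
  split => //; split; apply: hxspos; apply: (lt_le_trans hp); apply: hle; by rewrite eqxx ?orbT.
have hWs0 : forall i j, 0 <= Wstar i j.
  by move=> i j; rewrite /Wstar WofE; case: ifP => _ //; rewrite mulr_ge0.
have main : forall W, in_Wset W -> idiv Y W = (idiv Y Wstar + idiv Wstar W)%E.
  move=> W [x [hx0 ->]].
  have hW0 : forall i j, 0 <= Wof x i j.
    by move=> i j; rewrite WofE; case: ifP => _ //; rewrite mulr_ge0.
  have hWspos : forall i j, 0 < Wstar i j ->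
      bandb i j /\ 0 < xs (inord (i - j)) /\ 0 < xs j.
    move=> i j; rewrite /Wstar WofE; case: ifP => hb; last by rewrite ltxx.
    move=> hp; have [p1 p2] := prod_pos (hxs0 _) (hxs0 _) (negbT (gt_eqF hp)).
    by [].
  have hWne : forall i j, bandb i j -> Wof x i j != 0 ->
      0 < x (inord (i - j)) /\ 0 < x j.
    move=> i j hb; rewrite WofE hb; exact: prod_pos.
  have he2 : [exists i, exists j, (0 < Y i j) && (Wstar i j == 0)] = false.
    apply/negbTE/existsPn => i; apply/existsPn => j; apply/negP => /andP[hp /eqP h0].
    have [hb [p1 p2]] := hYpos i j hp.
    by move: h0; rewrite /Wstar WofE hb => /eqP; rewrite mulf_eq0 !gt_eqF.
  set e1 := [exists i, exists j, (0 < Y i j) && (Wof x i j == 0)].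
  set e3 := [exists i, exists j, (0 < Wstar i j) && (Wof x i j == 0)].
  have hZ : ~~ e1 -> forall k, x k = 0 -> Yhat Y k = 0.
    move=> /existsPn ne1 k hk; rewrite Yhat_alt //.
    apply: big1 => i _; apply: big1 => j _.
    have [hz|hp] : Y i j = 0 \/ 0 < Y i j.
      by move: (hY0 i j); rewrite le_eqVlt eq_sym => /orP[/eqP|]; [left|right].
      by rewrite hz mul0r.
    have [hb _] := hYpos i j hp.
    have hne : Wof x i j != 0.
      by move: (ne1 i) => /existsPn /(_ j); rewrite hp /=.
    have [q1 q2] := hWne i j hb hne.
    have -> : (inord (i - j) == k) = false by apply/negP => /eqP e; move: q1; rewrite e hk ltxx.
    have -> : (j == k) = false by apply/negP => /eqP e; move: q2; rewrite e hk ltxx.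
    by rewrite addr0 mulr0.
  have he13 : e1 = e3.
    apply/idP/idP.
      case/existsP => i /existsP [j /andP[hp h0]]; apply/existsP; exists i; apply/existsP; exists j.
      have [hb [p1 p2]] := hYpos i j hp.
      by rewrite h0 andbT /Wstar WofE hb mulr_gt0.
    apply: contraLR => ne1; apply/existsPn => i; apply/existsPn => j.
    apply/negP => /andP[hp h0].
    have [hb [p1 p2]] := hWspos i j hp.
    move: h0; rewrite WofE hb mulf_eq0 => /orP[/eqP h|/eqP h].
      by move: (hxsY _ p1); rewrite (hZ ne1 _ h) ltxx.
    by move: (hxsY _ p2); rewrite (hZ ne1 _ h) ltxx.
  rewrite /idiv he2 -/e1 -/e3 -he13.
  case: ifP => he1; first by rewrite addey.
  rewrite -EFinD; congr (_%:E).
  pose l k := ln (xs k) - ln (x k).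
  have hDE : \sum_i \sum_j (Wstar i j * (l (inord (i - j)) + l j) - Y i j * (l (inord (i - j)) + l j)) = 0.
    under eq_bigr do rewrite sumrB.
    rewrite sumrB (key (Wof_bandz _)) (key hYb).
    by under [X in X - _]eq_bigr do rewrite hYhW; rewrite subrr.
  have ne1 : forall i j, 0 < Y i j -> Wof x i j != 0.
    move=> i j hp; apply/negP => h0; move: he1; rewrite /e1.
    by move=> /negbT/existsPn/(_ i)/existsPn/(_ j); rewrite hp h0.
  have ne3 : forall i j, 0 < Wstar i j -> Wof x i j != 0.
    move=> i j hp; apply/negP => h0; move: he1; rewrite he13 /e3.
    by move=> /negbT/existsPn/(_ i)/existsPn/(_ j); rewrite hp h0.
  have CC := (comb
    (F := fun i j => if Y i j == 0 then Wof x i j else Y i j * ln (Y i j / Wof x i j) - Y i j + Wof x i j)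
    (G := fun i j => if Y i j == 0 then Wstar i j else Y i j * ln (Y i j / Wstar i j) - Y i j + Wstar i j)
    (H := fun i j => if Wstar i j == 0 then Wof x i j else Wstar i j * ln (Wstar i j / Wof x i j) - Wstar i j + Wof x i j)
    (K := fun i j => Wstar i j * (l (inord (i - j)) + l j) - Y i j * (l (inord (i - j)) + l j)) hDE).
  apply: CC => i j /=.
  have [hz|hp] : Y i j = 0 \/ 0 < Y i j.
    by move: (hY0 i j); rewrite le_eqVlt eq_sym => /orP[/eqP|]; [left|right].
    rewrite hz eqxx !mul0r subr0.
    have [hwz|hwp] : Wstar i j = 0 \/ 0 < Wstar i j.
      by move: (hWs0 i j); rewrite le_eqVlt eq_sym => /orP[/eqP|]; [left|right].
      by rewrite hwz eqxx mul0r addr0 add0r.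
    have [hb [p1 p2]] := hWspos _ _ hwp.
    have [q1 q2] := hWne _ _ hb (ne3 _ _ hwp).
    rewrite (gt_eqF hwp) /Wstar -/xs !WofE hb.
    rewrite (ln_divP (mulr_gt0 p1 p2) (mulr_gt0 q1 q2)) (lnMP p1 p2) (lnMP q1 q2) /l.
    ring.
  have [hb [p1 p2]] := hYpos _ _ hp.
  have [q1 q2] := hWne _ _ hb (ne1 _ _ hp).
  have hwp : 0 < Wstar i j by rewrite /Wstar WofE hb mulr_gt0.
  rewrite (gt_eqF hp) (gt_eqF hwp) /Wstar -/xs !WofE hb.
  rewrite (ln_divP hp (mulr_gt0 q1 q2)) (ln_divP hp (mulr_gt0 p1 p2)).
  rewrite (ln_divP (mulr_gt0 p1 p2) (mulr_gt0 q1 q2)) (lnMP p1 p2) (lnMP q1 q2) /l.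
  ring.
split.
- exact: hxs0.
- by exists xs.
- move=> W hW; rewrite (main W hW); apply: leeDl; apply: idiv_ge0 => //.
  case: hW => x [hx0 ->] i j; rewrite WofE; case: ifP => _ //; exact: mulr_ge0.
- exact: main.
Qed.
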